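(* Let $(R,d,P)$ be a commutative differential Rota–Baxter algebra of weight $\lambda$ over a commutative ring $\mathbf{k}$. For $u,v\in R$ put $\phi(u,v):=P(d(u)P(v))-uP(v)+P(uv)+\lambda P(d(u)v)$. Then for all $u,v,w\in R$: (1) $d(\phi(u,v))=0$; (2) $\phi(u,v)P(w)=P(\phi(u,v)w)+\phi(u,wP(v))+\phi(u,vP(w))+\lambda\,\phi(u,vw)$.
   Context: A commutative differential Rota–Baxter algebra of weight $\lambda\in\mathbf{k}$ is a commutative $\mathbf{k}$-algebra $R$ with linear maps $d,P:R\to R$ such that $d(1)=0$, $d(uv)=d(u)v+ud(v)+\lambda d(u)d(v)$, $P(u)P(v)=P(uP(v))+P(P(u)v)+\lambda P(uv)$, and $d\circ P=\mathrm{id}_R$. *)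

(* Defs.v *)
From HB Require Import structures.
From mathcomp Require Import all_boot all_order all_algebra.
Set Implicit Arguments. Unset Strict Implicit. Unset Printing Implicit Defensive.
Import GRing.Theory.
Local Open Scope ring_scope.

Definition is_diffRB (k : comPzRingType) (R : comAlgType k) (lam : k)
    (d P : {linear R -> R}) : Prop :=
  [/\ d 1 = 0,
      (forall u v : R, d (u * v) = d u * v + u * d v + lam *: (d u * d v)),
      (forall u v : R, P u * P v = P (u * P v) + P (P u * v) + lam *: P (u * v))
    & (forall u : R, d (P u) = u)].

Definition phiRB (k : comPzRingType) (R : comAlgType k) (lam : k)
    (d P : {linear R -> R}) (u v : R) : R :=
  P (d u * P v) - u * P v + P (u * v) + lam *: P (d u * v).

(* Main.v *)
Require Import Defs.
From HB Require Import structures.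
From mathcomp Require Import all_boot all_order all_algebra.
From mathcomp Require Import ring.
Import GRing.Theory.
Local Open Scope ring_scope.

Theorem mainTheorem6 (k : comPzRingType) (R : comAlgType k) (lam : k)
    (d P : {linear R -> R}) :
  is_diffRB lam d P ->
  forall u v w : R,
    d (phiRB lam d P u v) = 0 /\
    phiRB lam d P u v * P w =
      P (phiRB lam d P u v * w) + phiRB lam d P u (w * P v)
      + phiRB lam d P u (v * P w) + lam *: phiRB lam d P u (v * w).
Proof.
case=> d1 dM PM dP.
have phiE : forall u v, phiRB lam d P u v = P (d (u * P v)) - u * P v.
  move=> u v; rewrite /phiRB dM dP !linearD linearZ /=.
  by rewrite [RHS]addrAC (addrAC (P (d u * P v)) (P (u * v))). 
have key : forall x w, (P (d x) - x) * P w = P ((P (d x) - x) * w) + (P (d (x * P w)) - x * P w).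
  move=> x w; rewrite dM dP mulrBl PM mulrBl !linearD linearN linearZ /=. move: (P (d x * P w)) (P (P (d x) * w)) (lam *: P (d x * w)) (x * P w) (P (x * w)) => a b c e f. ring.
move=> u v w; split.
  by rewrite phiE linearB /= dP subrr.
rewrite !phiE key.
rewrite -mulrA PM (mulrC w (P v)) !mulrDr -scalerAr !linearD !linearZ /=. ring.
Qed.
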